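(* Consider $M$ positioning infrastructures; for the $m$-th infrastructure let $N_{\text{min}}^m$ be the minimum number of anchors required for positioning, $N_{\text{anc}}^m$ the total number of anchors providing ranging information, and $N_{\text{adv}}^m$ the number of anchors whose ranging information is manipulated by an uncoordinated attacker. Suppose that $$\left|\left\{m \mid N_{\text{anc}}^m - N_{\text{adv}}^m - N_{\text{min}}^m = 0\right\}\right| > 1 \ \lor\ \exists m,\ N_{\text{anc}}^m - N_{\text{adv}}^m - N_{\text{min}}^m > 0.$$ Then the true position $\mathbf{p}_{\text{usr}}(t)$ can be recovered from uncoordinated spoofing.
   Context: Idealized model of subset-based integrity monitoring across multiple infrastructures (e.g., GNSS, Wi-Fi, cellular): a platform at unknown true position $\mathbf{p}_{\text{usr}}(t)\in\mathbb{R}^3$ receives ranging measurements from anchors with known positions. Within each infrastructure $m$, for every subset of its anchors of size at least $N_{\text{min}}^m$ a position estimate is computed. Positioning noise and uncertainties are negligible (zero) while attacker-induced deviations are preserved, and geometry is good, so every benign-only subset yields exactly $\mathbf{p}_{\text{usr}}(t)$. ''Uncoordinated spoofing'' means manipulated ranging values are chosen independently (potentially randomly), so estimates from subsets involving manipulated measurements are random positions, almost surely inconsistent with the benign position and each other; ''recovered'' means the spoofed estimates can be excluded so that the remaining (more than one, mutually consistent) benign estimates give $\mathbf{p}_{\text{usr}}(t)$. *)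

(* Defs.v *)
From mathcomp Require Import all_boot all_order all_algebra.
Set Implicit Arguments. Unset Strict Implicit. Unset Printing Implicit Defensive.
Import Order.TTheory GRing.Theory Num.Theory.

(* A candidate anchor subset: an infrastructure index m together with a
   subset of the anchors of infrastructure m (anchors of m are 'I_(Nanc m)). *)
Definition subset_t (M : nat) (Nanc : 'I_M -> nat) : Type :=
  {m : 'I_M & {set 'I_(Nanc m)}}.

Definition valid (M : nat) (Nanc Nmin : 'I_M -> nat) (s : subset_t Nanc) : bool :=
  (Nmin (tag s) <= #|tagged s|)%N.

Definition benign (M : nat) (Nanc : 'I_M -> nat)
  (Adv : forall m : 'I_M, {set 'I_(Nanc m)}) (s : subset_t Nanc) : bool :=
  [disjoint tagged s & Adv (tag s)].

Definition consistent (M : nat) (Nanc Nmin : 'I_M -> nat) (P : eqType)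
  (est : subset_t Nanc -> P) (s : subset_t Nanc) : Prop :=
  valid Nmin s /\ exists s', valid Nmin s' /\ s' <> s /\ est s' = est s.

(* Recovery: after excluding all inconsistent (isolated) estimates, there
   remain consistent estimates (hence more than one, mutually consistent),
   and every remaining estimate is the true position. *)
Definition recovered (M : nat) (Nanc Nmin : 'I_M -> nat) (P : eqType)
  (est : subset_t Nanc -> P) (p : P) : Prop :=
  (exists s, consistent Nmin est s) /\
  (forall s, consistent Nmin est s -> est s = p).

(* Main.v *)
Require Import Defs.
From mathcomp Require Import all_boot all_order all_algebra.
From mathcomp Require Import zify.
Import Order.TTheory GRing.Theory Num.Theory.
Local Open Scope ring_scope.

Theorem theorem1 (R : realFieldType) (M : nat) (Nmin Nanc Nadv : 'I_M -> nat)
  (Adv : forall m : 'I_M, {set 'I_(Nanc m)})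
  (hAdv : forall m : 'I_M, #|Adv m| = Nadv m)
  (est : subset_t Nanc -> 'rV[R]_3) (p_usr : 'rV[R]_3)
  (hbenign : forall s, valid Nmin s -> benign Adv s -> est s = p_usr)
  (hspoof : forall s, valid Nmin s -> ~~ benign Adv s ->
      est s <> p_usr /\
      (forall s', valid Nmin s' -> s' <> s -> est s' <> est s))
  (hcond : (1 < #|[set m : 'I_M |
              ((Nanc m)%:Z - (Nadv m)%:Z - (Nmin m)%:Z == 0)%R]|)%N
           \/ exists m : 'I_M, 0 < (Nanc m)%:Z - (Nadv m)%:Z - (Nmin m)%:Z) :
  recovered Nmin est p_usr.
Proof.
have key : forall m (A : {set 'I_(Nanc m)}), [disjoint A & Adv m] ->
    (Nmin m <= #|A|)%N ->
    valid Nmin (existT _ m A) /\ benign Adv (existT _ m A) by [].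
have cardC : forall m, #|~: Adv m| = (Nanc m - Nadv m)%N.
  by move=> m; have := cardsC (Adv m); rewrite card_ord hAdv; lia.
have disC : forall m (A : {set 'I_(Nanc m)}), A \subset ~: Adv m ->
    [disjoint A & Adv m].
  by move=> m A sA; rewrite subsets_disjoint setCK in sA.
split; last first.
  move=> s [vs [s' [vs' [ns' es']]]].
  case: (boolP (benign Adv s)) => bs; first exact: hbenign _ vs bs.
  by case: (hspoof s vs bs) => _ /(_ s' vs' ns').
have conseq : forall s1 s2, valid Nmin s1 -> benign Adv s1 ->
    valid Nmin s2 -> benign Adv s2 -> s1 <> s2 ->
    exists s, consistent Nmin est s.
  move=> s1 s2 v1 b1 v2 b2 n12; exists s1; split=> //; exists s2; split=> //.
  split; first by move=> e; apply: n12; rewrite e.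
  by rewrite (hbenign _ v1 b1) (hbenign _ v2 b2).
have leA : forall m, (Nadv m <= Nanc m)%N.
  by move=> m; rewrite -hAdv -[X in (_ <= X)%N]card_ord max_card.
case: hcond => [hc | [m hm]].
  have [m1 [m2 [h1 h2 n12]]] : exists m1 m2,
      [/\ (Nanc m1)%:Z - (Nadv m1)%:Z - (Nmin m1)%:Z == 0,
          (Nanc m2)%:Z - (Nadv m2)%:Z - (Nmin m2)%:Z == 0 & m1 != m2].
    move/card_gt1P: hc => [x [y [hx hy nxy]]].
    by exists x, y; rewrite !inE in hx hy.
  have e1 : (Nanc m1 - Nadv m1)%N = Nmin m1.
    by move: h1 (leA m1); move/eqP; lia.
  have e2 : (Nanc m2 - Nadv m2)%N = Nmin m2.
    by move: h2 (leA m2); move/eqP; lia.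
  have [v1 b1] := key m1 (~: Adv m1) (disC _ _ (subxx _)) (eq_leq (esym (etrans (cardC m1) e1))).
  have [v2 b2] := key m2 (~: Adv m2) (disC _ _ (subxx _)) (eq_leq (esym (etrans (cardC m2) e2))).
  apply: (conseq _ _ v1 b1 v2 b2) => e.
  by move: n12; have /= -> := f_equal (@projT1 _ _) e; rewrite eqxx.
have lt : (Nmin m < Nanc m - Nadv m)%N by move: hm (leA m); lia.
have : (0 < #|~: Adv m|)%N by rewrite cardC; lia.
move/card_gt0P => [x hx].
have l1 : (Nmin m <= #|~: Adv m|)%N by rewrite cardC; lia.
have [v1 b1] := key m (~: Adv m) (disC _ _ (subxx _)) l1.
have sub2 : (~: Adv m) :\ x \subset ~: Adv m by apply: subD1set.
have c2 : #|(~: Adv m) :\ x| = (#|~: Adv m| - 1)%N.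
  by rewrite (cardsD1 x (~: Adv m)) hx; lia.
have l2 : (Nmin m <= #|(~: Adv m) :\ x|)%N by rewrite c2 cardC; lia.
have [v2 b2] := key m ((~: Adv m) :\ x) (disC _ _ sub2) l2.
apply: (conseq _ _ v1 b1 v2 b2) => e.
have := f_equal (fun s : subset_t Nanc => #|tagged s|) e => /=.
rewrite c2 cardC; lia.
Qed.
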